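(* Let $G$ be a finite group, $N$ a normal subgroup, and $\mathcal O$ an $N_\infty$ operad for $G$. Then (i) the levelwise fixed points $\mathcal O^N$ (with $(\mathcal O^N)_n=\mathcal O_n^{N\times\{1\}}$) form an $N_\infty$ $G/N$-operad, and (ii) for $N\le H\le G$, a finite $H/N$-set is admissible for $\mathcal O^N$ if and only if it is admissible for $\mathcal O$ when regarded as an $H$-set via $H\to H/N$.
   Context: For a group $\Pi$, a $\Pi$-operad consists of $\Pi\times\Sigma_n$-spaces $\mathcal O_n$, a $\Pi$-fixed identity in $\mathcal O_1$ and $\Pi$-equivariant composition maps satisfying the usual operad axioms. A universal space for a family $\mathcal F$ of subgroups (closed under subgroups and conjugation) is a space whose $\Gamma$-fixed points are contractible for $\Gamma\in\mathcal F$ and empty otherwise. An $N_\infty$ $\Pi$-operad is a $\Pi$-operad with $\mathcal O_0$ $\Pi$-contractible, $\Sigma_n$ acting freely on $\mathcal O_n$, and $\mathcal O_n$ a universal space for a family of subgroups of $\Pi\times\Sigma_n$ containing all $L\times\{1\}$. For $L\le\Pi$ and a finite $L$-set $T$, $|T|=n$, let $\Gamma_T\le\Pi\times\Sigma_n$ be the graph of a homomorphism $L\to\Sigma_n$ encoding $T$; $T$ is admissible for $\mathcal O$ if $\mathcal O_n^{\Gamma_T}\neq\emptyset$. *)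

(* Defs.v *)
From HB Require Import structures.
From mathcomp Require Import all_boot all_order all_algebra all_fingroup.
From mathcomp Require Import all_classical reals topology.
From mathcomp Require Import Rstruct Rstruct_topology.

Unset Strict Implicit.
Unset Printing Implicit Defensive.

Local Open Scope classical_set_scope.

Definition Rl := Rdefinitions.R.
Definition unit_itv : set Rl := [set t : Rl | (0 <= t <= 1)%R].

Definition contractible_set (X : topologicalType) (A : set X) : Prop :=
  exists2 a : X, A a &
  exists H : X -> Rl -> X,
    [/\ {within A `*` unit_itv, continuous (fun p : X * Rl => H p.1 p.2)},
        (forall x t, A x -> unit_itv t -> A (H x t)),
        (forall x, A x -> H x 0%R = x) &
        (forall x, A x -> H x 1%R = a)].

(** Raw data of a Pi-operad, Pi = the finite group [pT]:
    spaces O_n, a left Pi-action and a left Sigma_n-action on O_n,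
    an identity in O_1 and composition maps
    gamma : O_k x O_{j_1} x ... x O_{j_k} -> O_{j_1 + ... + j_k}. *)
Record preOperad (pT : finGroupType) := PreOperad {
  sp : nat -> topologicalType;
  actP : forall n, pT -> sp n -> sp n;
  actS : forall n, 'S_n -> sp n -> sp n;
  opunit : sp 1;
  opcomp : forall k (js : 'I_k -> nat),
      sp k -> (forall i : 'I_k, sp (js i)) -> sp (\sum_(i < k) js i)
}.
Arguments sp {pT} O n : rename.
Arguments actP {pT} O n g x : rename.
Arguments actS {pT} O n s x : rename.
Arguments opunit {pT} O : rename.
Arguments opcomp {pT} O {k} js c d : rename.

Section Operads.
Variable pT : finGroupType.
Implicit Type O : preOperad pT.

Definition tr O m n (E : m = n) (x : sp O m) : sp O n :=
  eq_rect m (fun n => sp O n) x n E.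
Arguments tr {O m n} E x.

(** block index: input t of the i-th block *)
Definition Rank k (js : 'I_k -> nat) (i : 'I_k) (t : 'I_(js i)) :
  'I_(\sum_(i < k) js i) := @tagnat.Rank k js i t.
Arguments Rank {k js i} t.

Definition fixset O n (Gam : {set (pT * 'S_n)}) : set (sp O n) :=
  fun x => forall p, p \in Gam -> actP O n p.1 (actS O n p.2 x) = x.

Definition op_actions O : Prop :=
   (forall n x, actP O n 1%g x = x) /\
   (forall n g h x, actP O n (g * h)%g x = actP O n g (actP O n h x)) /\
   (forall n g, continuous (actP O n g)) /\
   (forall n x, actS O n 1%g x = x) /\
   (forall n s t x, actS O n (s * t)%g x = actS O n s (actS O n t x)) /\
   (forall n s, continuous (actS O n s)) /\
   (forall n g s x, actP O n g (actS O n s x) = actS O n s (actP O n g x)).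

Definition op_unit_fixed O : Prop :=
  forall g, actP O 1 g (opunit O) = opunit O.

Definition op_comp O : Prop :=
   (forall k (js : 'I_k -> nat),
      continuous (fun p : sp O k * prod_topology (fun i : 'I_k => sp O (js i)) =>
                    opcomp O js p.1 p.2)) /\
   (forall k (js : 'I_k -> nat) g c (d : forall i, sp O (js i)),
      opcomp O js (actP O k g c) (fun i => actP O (js i) g (d i))
      = actP O _ g (opcomp O js c d)).

Definition op_assoc O : Prop :=
   forall k (js : 'I_k -> nat) (ls : 'I_(\sum_(i < k) js i) -> nat)
      (c : sp O k) (d : forall i, sp O (js i)) (e : forall m, sp O (ls m))
      (E : \sum_(m < \sum_(i < k) js i) ls m
           = \sum_(i < k) \sum_(t < js i) ls (Rank t)),
      tr E (opcomp O ls (opcomp O js c d) e)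
      = opcomp O (fun i => \sum_(t < js i) ls (Rank t)) c
          (fun i => opcomp O (fun t => ls (Rank t)) (d i)
                      (fun t => e (Rank t))).

Definition op_unital O : Prop :=
   (forall j (x : sp O j) (E : \sum_(i < 1) j = j),
      tr E (opcomp O (fun _ : 'I_1 => j) (opunit O) (fun _ => x)) = x) /\
   (forall k (c : sp O k) (E : \sum_(i < k) 1 = k),
      tr E (opcomp O (fun _ : 'I_k => 1) c (fun _ => opunit O)) = c).

(* Sigma-equivariance (for left actions): block permutations, block sums *)
Definition op_sym_equivariant O : Prop :=
   (forall k (js : 'I_k -> nat) (s : 'S_k) (c : sp O k)
      (d : forall i, sp O (js i))
      (E : \sum_(i < k) js (s i) = \sum_(i < k) js i)
      (b : 'S_(\sum_(i < k) js i)),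
      (forall i (t : 'I_(js (s i))),
          b (cast_ord E (@Rank k (fun i => js (s i)) i t)) = Rank t) ->
      opcomp O js (actS O k s c) d
      = actS O _ b (tr E (opcomp O (fun i => js (s i)) c (fun i => d (s i))))) /\
   (forall k (js : 'I_k -> nat) (c : sp O k) (d : forall i, sp O (js i))
      (ts : forall i, 'S_(js i)) (b : 'S_(\sum_(i < k) js i)),
      (forall i (t : 'I_(js i)), b (Rank t) = Rank (ts i t)) ->
      opcomp O js c (fun i => actS O (js i) (ts i) (d i))
      = actS O _ b (opcomp O js c d)).

Definition isOperad O : Prop :=
  [/\ op_actions O, op_unit_fixed O, op_comp O, op_assoc O &
      op_unital O /\ op_sym_equivariant O].

Definition Pi_contractible O : Prop :=
  exists2 x0 : sp O 0, (forall g, actP O 0 g x0 = x0) &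
  exists H : sp O 0 -> Rl -> sp O 0,
    [/\ {within setT `*` unit_itv, continuous (fun p : sp O 0 * Rl => H p.1 p.2)},
        (forall x, H x 0%R = x), (forall x, H x 1%R = x0) &
        (forall g x t, H (actP O 0 g x) t = actP O 0 g (H x t))].

Definition is_family (hT : finGroupType) (F : {set {set hT}}) : Prop :=
  [/\ (forall Gam, Gam \in F -> group_set Gam),
      (forall Gam Gam', Gam \in F -> group_set Gam' -> Gam' \subset Gam ->
                        Gam' \in F) &
      (forall Gam y, Gam \in F -> (Gam :^ y)%g \in F)].

Definition universal_n O n : Prop :=
  exists F : {set {set (pT * 'S_n)}},
  [/\ is_family _ F,
      (forall Gam : {group (pT * 'S_n)}, (Gam : {set _}) \in F ->
                        contractible_set _ (fixset O n Gam)),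
      (forall Gam : {group (pT * 'S_n)}, (Gam : {set _}) \notin F ->
                        fixset O n Gam = set0) &
      (forall L : {group pT}, finset.setX L [set 1%g]%SET \in F)].

Definition isNinf O : Prop :=
  [/\ isOperad O, Pi_contractible O,
      (forall n s x, actS O n s x = x -> s = 1%g) &
      (forall n, universal_n O n)].

(** A finite L-set T of cardinality n, encoded by f : L -> Sigma_n; it is
    admissible if the graph Gamma_T has a fixed point in O_n. *)
Definition admissible O n (L : {set pT}) (f : pT -> 'S_n) : Prop :=
  exists x, fixset O n [set (l, f l) | l in L]%SET x.

End Operads.
Arguments fixset {pT} O n Gam.
Arguments isOperad {pT} O.
Arguments isNinf {pT} O.
Arguments admissible {pT} O n L f.

Definition FixSp (gT : finGroupType) (O : preOperad gT) (N : {set gT})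
  (n : nat) : topologicalType :=
  set_type (fixset O n (finset.setX N [set 1%g]%SET)).
Arguments FixSp {gT} O N n.

(* Main.v *)
Require Import Defs.
From HB Require Import structures.
From mathcomp Require Import all_boot all_order all_algebra all_fingroup.
From mathcomp Require Import all_classical reals topology.
From mathcomp Require Import Rstruct Rstruct_topology.

Module TopAux.
Local Open Scope classical_set_scope.

Section Topo.
Context {X : topologicalType} (B : set X).

Lemma val_cont : continuous (@set_val X B).
Proof. exact: initial_continuous. Qed.

Lemma into_sub (Z : topologicalType) (f : Z -> set_type B) :
  continuous (set_val \o f) -> continuous f.
Proof. exact: continuous_comp_initial. Qed.
End Topo.

Lemma pair_cont (X Y X' Y' : topologicalType) (f : X -> X') (g : Y -> Y') :
  continuous f -> continuous g -> continuous (fun p : X * Y => (f p.1, g p.2)).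
Proof.
move=> cf cg p; apply: cvg_pair.
  apply: continuous_comp; last exact: cf. exact: cvg_fst.
apply: continuous_comp; last exact: cg. exact: cvg_snd.
Qed.

Lemma prod_map_cont (I : eqType) (T U : I -> topologicalType)
  (h : forall i, T i -> U i) : (forall i, continuous (h i)) ->
  continuous (fun f : prod_topology T => (fun i => h i (f i)) : prod_topology U).
Proof.
move=> hc f.
apply: (iffRL (cvg_sup _ _ _)) => [|i].
  by apply: fmap_filter; apply: nbhs_filter.

have := @continuous_comp_initial (forall i, U i) (prod_topology T) _ (fun g => g i)
   (fun f : prod_topology T => (fun i => h i (f i))).
apply.
move=> x; apply: continuous_comp; last exact: hc.
exact: proj_continuous.
Qed.

Section Lift.
Context {X : topologicalType} (B : set X).

Definition Hlift (H : X -> Rl -> X) (x : set_type B) (t : Rl) : set_type B :=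
  match pselect (B (H (set_val x) t)) with
  | left p => exist (fun z => z \in B) (H (set_val x) t) (mem_set p)
  | right _ => x end.

Lemma HliftE H x t : B (H (set_val x) t) -> set_val (Hlift H x t) = H (set_val x) t.
Proof. by rewrite /Hlift; case: pselect. Qed.

Lemma Hlift_cont (Y : set X) (Y' : set (set_type B)) H :
  (forall x, Y' x -> Y (set_val x)) ->
  (forall x t, Y' x -> unit_itv t -> B (H (set_val x) t)) ->
  {within Y `*` unit_itv, continuous (fun p : X * Rl => H p.1 p.2)} ->
  {within Y' `*` unit_itv, continuous (fun p : set_type B * Rl => Hlift H p.1 p.2)}.
Proof.
move=> hY hB /subspace_sigL_continuousP cH.
apply/subspace_sigL_continuousP; apply: into_sub.
have phP : forall p : set_type (Y' `*` unit_itv),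
    (set_val (set_val p).1, (set_val p).2) \in Y `*` unit_itv.
  move=> [[x t] /= /set_mem [h1 h2]]; apply: mem_set; split => //; exact: hY.
pose ph (p : set_type (Y' `*` unit_itv)) : set_type (Y `*` unit_itv) :=
  exist (fun z => z \in Y `*` unit_itv) _ (phP p).
have -> : set_val \o sigL (Y' `*` unit_itv) (fun p : set_type B * Rl => Hlift H p.1 p.2)
   = sigL (Y `*` unit_itv) (fun p : X * Rl => H p.1 p.2) \o ph.
  apply: funext => -[[x t] hp] /=; rewrite /sigL /=.
  move/set_mem: (hp) => [h1 h2].
  by rewrite HliftE //; apply: hB.
move=> p; apply: continuous_comp; last exact: cH.
apply: (@into_sub _ _ _ ph) => q.
have -> : set_val \o ph = (fun r : set_type B * Rl => (set_val r.1, r.2)) \o set_val by [].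
apply: continuous_comp; first exact: val_cont.
by apply: (@pair_cont _ _ _ _ set_val id); [exact: val_cont | move=> ?].
Qed.

Lemma lift_contr (A : set X) (A' : set (set_type B)) :
  (forall x : set_type B, A' x <-> A (set_val x)) -> A `<=` B ->
  contractible_set X A -> contractible_set (set_type B) A'.
Proof.
move=> hA sAB [a Aa [H [cH HA H0 H1]]].
have Ba : a \in B by apply: mem_set; apply: sAB.
exists (exist (fun z => z \in B) a Ba); first by apply/hA.
exists (Hlift H); split.
- apply: (@Hlift_cont A _ H _ _ cH); first by move=> x Ax; apply: (proj1 (hA x)).
  move=> x t Ax It; apply: sAB; apply: HA => //; exact: (proj1 (hA x)).
- move=> x t Ax It; have Ax' := proj1 (hA x) Ax.
  apply/(proj2 (hA _)); rewrite HliftE; [exact: HA|apply: sAB; exact: HA].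
- move=> x Ax; have Ax' := proj1 (hA x) Ax.
  apply: val_inj; rewrite /= -set_valE HliftE H0 //; exact: sAB.
- move=> x Ax; have Ax' := proj1 (hA x) Ax.
  apply: val_inj; rewrite /= -set_valE HliftE H1 //; exact: sAB.
Qed.
End Lift.
End TopAux.
Import TopAux.

Module OpAux.
Section Main.
Variables (gT : finGroupType) (N : {group gT}) (O : preOperad gT).
Hypothesis hN : (N <| [set: gT])%g.
Hypothesis hA : op_actions gT O.
Hypothesis hC : op_comp gT O.
Hypothesis hU : op_unit_fixed gT O.

Notation FB n := (@Defs.fixset gT O n (finset.setX N [set 1%g]%SET)).

Lemma nN g : g \in 'N(N)%g.
Proof. by case/andP: hN => _ /fintype.subsetP; apply; rewrite inE. Qed.

Lemma aP1 n x : actP O n 1%g x = x. Proof. by case: hA. Qed.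
Lemma aPM n g h x : actP O n (g * h)%g x = actP O n g (actP O n h x).
Proof. by case: hA => _ []. Qed.
Lemma aPc n g : continuous (actP O n g). Proof. by case: hA => _ [_ []]. Qed.
Lemma aS1 n x : actS O n 1%g x = x. Proof. by case: hA => _ [_ [_ []]]. Qed.
Lemma aSM n s t x : actS O n (s * t)%g x = actS O n s (actS O n t x).
Proof. by case: hA => _ [_ [_ [_ []]]]. Qed.
Lemma aSc n s : continuous (actS O n s). Proof. by case: hA => _ [_ [_ [_ [_ []]]]]. Qed.
Lemma aPS n g s x : actP O n g (actS O n s x) = actS O n s (actP O n g x).
Proof. by case: hA => _ [_ [_ [_ [_ []]]]]. Qed.

Lemma inB n x : FB n x <-> forall m, m \in N -> actP O n m x = x.
Proof.
split.
  move=> h m mN; have := h (m, 1%g); rewrite finset.in_setX mN set11 /= aS1; exact.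
move=> h [m s]; rewrite finset.in_setX => /andP [mN]; rewrite inE => /eqP -> /=.
rewrite aS1; exact: h.
Qed.

Lemma actB n g x : FB n x -> FB n (actP O n g x).
Proof.
move=> /inB h; apply/inB => m mN.
by rewrite -aPM conjgC aPM h // memJ_norm // nN.
Qed.

Lemma actSB n s x : FB n x -> FB n (actS O n s x).
Proof. by move=> /inB h; apply/inB => m mN; rewrite aPS h. Qed.

Lemma uB : FB 1 (opunit O).
Proof. by apply/inB => m _; apply: hU. Qed.

Lemma compB k (js : 'I_k -> nat) c (d : forall i, sp O (js i)) :
  FB k c -> (forall i, FB (js i) (d i)) -> FB _ (opcomp O js c d).
Proof.
move=> /inB hc hd; apply/inB => m mN.
case: hC => _ <-; rewrite hc //; congr opcomp.
by apply: functional_extensionality_dep => i; move/inB: (hd i); apply.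
Qed.

Definition aPf n (c : coset_of N) (x : FixSp O N n) : FixSp O N n :=
  exist (fun z => z \in FB n) (actP O n (repr c) (set_val x))
    (mem_set (@actB n (repr c) _ (set_mem (valP x)))).
Definition aSf n (s : 'S_n) (x : FixSp O N n) : FixSp O N n :=
  exist (fun z => z \in FB n) (actS O n s (set_val x))
    (mem_set (@actSB n s _ (set_mem (valP x)))).
Definition uf : FixSp O N 1 := exist (fun z => z \in FB 1) (opunit O) (mem_set uB).
Definition cpf k (js : 'I_k -> nat) (c : FixSp O N k)
  (d : forall i : 'I_k, FixSp O N (js i)) : FixSp O N (\sum_(i < k) js i) :=
  exist (fun z => z \in FB _) (opcomp O js (set_val c) (fun i => set_val (d i)))
    (mem_set (@compB k js _ _ (set_mem (valP c)) (fun i => set_mem (valP (d i))))).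

Lemma aPE n c x : set_val (aPf n c x) = actP O n (repr c) (set_val x).
Proof. by []. Qed.
Lemma aSE n s x : set_val (aSf n s x) = actS O n s (set_val x).
Proof. by []. Qed.
Lemma cpE k js c d : set_val (@cpf k js c d) = opcomp O js (set_val c) (fun i => set_val (d i)).
Proof. by []. Qed.
Lemma uE : set_val uf = opunit O. Proof. by []. Qed.

Lemma aP_coset n g x : set_val (aPf n (coset N g) x) = actP O n g (set_val x).
Proof.
rewrite aPE.
have [z zN ->] := kercoset_rcoset (nN (repr (coset N g))) (nN g) (coset_reprK _).
rewrite aPM; have /inB := @actB n g _ (set_mem (valP x)); apply; exact: zN.
Qed.

Definition ONf := @PreOperad (coset_of N) (FixSp O N) aPf aSf uf cpf.


Lemma sv_inj n (x y : FixSp O N n) : set_val x = set_val y -> x = y.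
Proof. by move=> h; apply: val_inj. Qed.

Lemma val_tr m n (E : m = n) (x : FixSp O N m) :
  set_val (tr _ ONf m n E x) = tr _ O m n E (set_val x).
Proof. by case: n / E. Qed.

Lemma ONf_actions : op_actions _ ONf.
Proof.
split.
  move=> n x; apply: sv_inj; rewrite /ONf /=.
  have e : (1%g : coset_of N) = coset N 1%g by rewrite coset_id.
  by rewrite e aP_coset aP1.
split.
  move=> n g h x; apply: sv_inj; rewrite /ONf /=.
  have e : (g * h = coset N (repr g * repr h))%g by rewrite coset_morphM ?nN // !coset_reprK.
  by rewrite e aP_coset !aPE aPM.
split.
  move=> n g; apply: into_sub => x.
  have -> : set_val \o aPf n g = actP O n (repr g) \o set_val by [].
  apply: continuous_comp; [exact: val_cont | exact: aPc].
split.
  by move=> n x; apply: sv_inj; rewrite /ONf /=; rewrite aSE aS1.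
split.
  by move=> n s t x; apply: sv_inj; rewrite /ONf /=; rewrite !aSE aSM.
split.
  move=> n s; apply: into_sub => x.
  have -> : set_val \o aSf n s = actS O n s \o set_val by [].
  apply: continuous_comp; [exact: val_cont | exact: aSc].
by move=> n g s x; apply: sv_inj; rewrite /ONf /=; rewrite aPE !aSE aPE aPS.
Qed.

Lemma ONf_unit : op_unit_fixed _ ONf.
Proof. by move=> g; apply: sv_inj; rewrite /ONf /=; rewrite aPE uE hU. Qed.

Lemma ONf_comp : op_comp _ ONf.
Proof.
split.
  move=> k js; apply: into_sub => p.
  have -> : set_val \o (fun p : sp ONf k * prod_topology (fun i : 'I_k => sp ONf (js i)) => opcomp ONf js p.1 p.2)
    = (fun q : sp O k * prod_topology (fun i : 'I_k => sp O (js i)) => opcomp O js q.1 q.2) \o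
      (fun p : sp ONf k * prod_topology (fun i : 'I_k => sp ONf (js i)) =>
         (set_val p.1, (fun i => set_val (p.2 i)) : prod_topology (fun i : 'I_k => sp O (js i)))) by [].
  apply: continuous_comp; last by case: hC => + _; apply.
  have pc := (@pair_cont _ _ _ _ set_val (fun f : prod_topology (fun i : 'I_k => sp ONf (js i)) =>
         (fun i => set_val (f i)) : prod_topology (fun i : 'I_k => sp O (js i)))
     (@val_cont _ _) (@prod_map_cont _ _ _ _ (fun i => @val_cont _ _))).
  exact: pc.
move=> k js g c d; apply: sv_inj; rewrite /ONf /=.
by rewrite cpE aPE aPE cpE; case: hC => _ <-.
Qed.

Lemma ONf_assoc : op_assoc _ O -> op_assoc _ ONf.
Proof.
move=> h k js ls c d e E; apply: sv_inj; rewrite val_tr; exact: h.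
Qed.

Lemma ONf_unital : op_unital _ O -> op_unital _ ONf.
Proof.
move=> [h1 h2]; split.
  move=> j x E; apply: sv_inj; rewrite val_tr; exact: h1.
move=> k c E; apply: sv_inj; rewrite val_tr; exact: h2.
Qed.

Lemma ONf_sym : op_sym_equivariant _ O -> op_sym_equivariant _ ONf.
Proof.
move=> [h1 h2]; split.
  move=> k js s c d E b hb; apply: sv_inj.
  rewrite [RHS]aSE val_tr; exact: h1.
move=> k js c d ts b hb; apply: sv_inj.
rewrite [RHS]aSE; exact: h2.
Qed.

Lemma ONf_Pi : Pi_contractible _ O -> Pi_contractible _ ONf.
Proof.
move=> [x0 hx0 [H [cH H0 H1 HG]]].
have Bx0 : FB 0 x0 by apply/inB => m _; exact: hx0.
have hB : forall (x : FixSp O N 0) t, FB 0 (H (set_val x) t).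
  move=> x t; apply/inB => m mN; rewrite -HG; congr H.
  by move/inB: (set_mem (valP x)); apply.
exists (exist (fun z => z \in FB 0) x0 (mem_set Bx0)).
  by move=> g; apply: sv_inj; rewrite /ONf /= aPE; exact: hx0.
exists (Hlift (FB 0) H); split.
- by apply: (@Hlift_cont _ (FB 0) setT setT H _ _ cH) => // x t _ _; exact: hB.
- by move=> x; apply: sv_inj; rewrite (@HliftE _ _ _ _ _ (hB x 0%R)) H0.
- by move=> x; apply: sv_inj; rewrite (@HliftE _ _ _ _ _ (hB x 1%R)) H1.
- move=> g x t; apply: sv_inj; rewrite /ONf /=.
  rewrite (@HliftE _ _ _ _ _ (hB _ t)) aPE (@HliftE _ _ _ _ _ (hB _ t)).
  by rewrite aPE HG.
Qed.

Lemma ONf_free : (forall n s x, actS O n s x = x -> s = 1%g) ->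
  forall n s (x : FixSp O N n), aSf n s x = x -> s = 1%g.
Proof. by move=> h n s x /(congr1 set_val); rewrite aSE; exact: h. Qed.

Definition pre n (G : {set coset_of N * 'S_n}) : {set gT * 'S_n} :=
  [set p | (coset N p.1, p.2) \in G].
Arguments pre {n} G.

Lemma fix_pre n G x : Defs.fixset ONf n G x <-> Defs.fixset O n (pre G) (set_val x).
Proof.
split.
  move=> h [g s]; rewrite inE /= => pG.
  have := h _ pG; move/(congr1 set_val); rewrite /ONf /= aP_coset aSE; exact.
move=> h [c s] qG; apply: sv_inj; rewrite /ONf /= aPE aSE; apply: (h (repr c, s)).
by rewrite inE /= coset_reprK.
Qed.

Lemma pre_group {n} {G} : group_set G -> group_set (@pre n G).
Proof.
move=> gG; have [g1 gM] := group_setP gG; apply/group_setP; split.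
  by rewrite inE /= coset_id.
move=> [a s] [b t]; rewrite !inE /= => ha hb.
by rewrite coset_morphM ?nN //; exact: (gM _ _ ha hb).
Qed.

Lemma FB_pre {n} {G} {x} : group_set G -> Defs.fixset O n (@pre n G) x -> FB n x.
Proof.
move=> gG h p hp; apply: h; case: p hp => m s.
rewrite finset.in_setX inE => /andP [mN /eqP ->]; rewrite inE /= coset_id //.
by have [g1 _] := group_setP gG.
Qed.

Lemma cJ a b : coset N (a ^ b)%g = (coset N a ^ coset N b)%g.
Proof. exact: (morphJ (coset_morphism N) (nN a) (nN b)). Qed.
Lemma cV a : coset N (a^-1)%g = (coset N a)^-1%g.
Proof. exact: (morphV (coset_morphism N) (nN a)). Qed.

Lemma preJ n G (y : coset_of N * 'S_n) : pre (G :^ y)%g = (pre G :^ (repr y.1, y.2))%g.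
Proof.
apply/finset.setP => -[a s]; rewrite mem_conjg !inE mem_conjg /=.
by rewrite cJ cV coset_reprK.
Qed.

Definition Fp n (F : {set {set gT * 'S_n}}) : {set {set coset_of N * 'S_n}} :=
  [set G | group_set G && (pre G \in F)].
Arguments Fp {n} F.

Lemma ONf_univ n : universal_n _ O n -> universal_n _ ONf n.
Proof.
move=> [F [[fg fs fc] hc he hL]].
exists (Fp F); split.
- split.
  + by move=> G; rewrite inE => /andP [].
  + move=> G G'; rewrite !inE => /andP [gG pF] gG' sub; rewrite gG' /=.
    apply: (fs (pre G) (pre G')) => //; first exact: pre_group.
    by apply/fintype.subsetP => p; rewrite !inE; exact: (fintype.subsetP sub).
  + move=> G y; rewrite !inE => /andP [gG pF]; apply/andP; split.
      exact: (group_set_conjG (Group gG) y).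
    by rewrite preJ; exact: fc.
- move=> G; rewrite inE => /andP [_ pF].
  have := hc (Group (pre_group (groupP G))) pF => h.
  apply: (@lift_contr _ (FB n) _ _ _ _ h); first exact: fix_pre.
  move=> x; exact: (FB_pre (groupP G)).
- move=> G; rewrite inE (groupP G) /= => pF.
  have e := he (Group (pre_group (groupP G))) pF.
  by apply/seteqP; split => [x /fix_pre|x //]; rewrite /= e.
- move=> L; rewrite inE group_setX /=.
  have -> : @pre n (finset.setX L [set 1%g]) = finset.setX (coset N @*^-1 L)%g [set 1%g].
    apply/finset.setP => -[a s]; rewrite !inE /=; have := nN a; rewrite inE => ->.
    by [].
  exact: (hL (coset N @*^-1 L)%G).
Qed.

Lemma ONf_adm (H : {group gT}) n (f : {morphism (H / N)%g >-> 'S_n}) :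
  (N \subset H)%g ->
  (admissible ONf n (H / N)%g f <-> admissible O n H (fun h => f (coset N h))).
Proof.
move=> sNH; split.
- move=> [x hx]; exists (set_val x) => p /imsetP [h hH ->] /=.
  have := hx (coset N h, f (coset N h)) (imset_f _ (mem_quotient N hH)).
  by move/(congr1 set_val); rewrite /ONf /= aP_coset aSE.
- move=> [y hy].
  have By : FB n y.
    apply/inB => m mN.
    have := hy (m, f (coset N m)) (imset_f _ (fintype.subsetP sNH m mN)).
    by rewrite /= coset_id // morph1 aS1.
  exists (exist (fun z => z \in FB n) y (mem_set By)) => q /imsetP [l lHN ->].
  case/morphimP: lHN => h _ hH ->.
  apply: sv_inj; rewrite /ONf /= aP_coset aSE.
  exact: (hy (h, f (coset N h)) (imset_f _ hH)).
Qed.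
End Main.
End OpAux.
Import OpAux.

Theorem mainTheorem20 (gT : finGroupType) (N : {group gT}) (O : preOperad gT) :
  (N <| [set: gT])%g -> isNinf O ->
  exists (aP : forall n, coset_of N -> FixSp O N n -> FixSp O N n)
         (aS : forall n, 'S_n -> FixSp O N n -> FixSp O N n)
         (u : FixSp O N 1)
         (cp : forall k (js : 'I_k -> nat),
                 FixSp O N k -> (forall i : 'I_k, FixSp O N (js i)) ->
                 FixSp O N (\sum_(i < k) js i)),
    let ON := @PreOperad (coset_of N) (FixSp O N) aP aS u cp in
    [/\ (* ON is the levelwise N-fixed points of O, with the induced
           G/N-action, Sigma_n-actions, identity and composition *)
        (forall n (g : gT) (x : FixSp O N n),
            set_val (aP n (coset N g) x) = actP O n g (set_val x)) /\
        (forall n (s : 'S_n) (x : FixSp O N n),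
            set_val (aS n s x) = actS O n s (set_val x)) /\
        set_val u = opunit O /\
        (forall k (js : 'I_k -> nat) (c : FixSp O N k)
                (d : forall i, FixSp O N (js i)),
            set_val (cp k js c d) = opcomp O js (set_val c) (fun i => set_val (d i))),
        (* (i) O^N is an N_infty G/N-operad *)
        isNinf ON &
        (* (ii) admissibility of finite H/N-sets, N <= H <= G *)
        forall (H : {group gT}) (n : nat) (f : {morphism (H / N)%g >-> 'S_n}),
          (N \subset H)%g ->
          (admissible ON n (H / N)%g f <->
           admissible O n H (fun h => f (coset N h)))].
Proof.
move=> hN [[hA hU hC hAs [hUn hSy]] hPi hFree hUniv].
exists (@aPf _ _ _ hN hA), (@aSf _ N _ hA), (@uf _ N _ hA hU), (@cpf _ N _ hA hC) => ON; rewrite /ON.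
split.
- split; first by move=> n g x; apply: aP_coset.
  by split; [|split].
- split.
  + split.
    * exact: (@ONf_actions _ _ _ hN hA hC hU).
    * exact: (@ONf_unit _ _ _ hN hA hC hU).
    * exact: (@ONf_comp _ _ _ hN hA hC hU).
    * exact: (@ONf_assoc _ _ _ hN hA hC hU hAs).
    * split; [exact: (@ONf_unital _ _ _ hN hA hC hU hUn) | exact: (@ONf_sym _ _ _ hN hA hC hU hSy)].
  + exact: (@ONf_Pi _ _ _ hN hA hC hU hPi).
  + exact: (@ONf_free _ _ _ hA hFree).
  + move=> n. have := (@ONf_univ _ _ _ hN hA hC hU n (hUniv n)). exact.
- move=> H n f sNH; exact: (@ONf_adm _ _ _ hN hA hC hU H n f sNH).
Qed.
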